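(* Let $n\ge2$ and $0\le\delta<\frac1n$. Let $B=I-\delta e^{n\times n}$ and let $\mathcal B=\{b_1,\dots,b_n\}$ be the set of columns of $B$. Let $\alpha=\frac{1}{\sqrt{\delta^2n-2\delta+1}}$ and $\mathcal P^\delta=\alpha\mathcal B\cup(-\alpha\mathcal B)=\{\alpha b_1,\dots,\alpha b_n,-\alpha b_1,\dots,-\alpha b_n\}$. Then $\mathcal P^\delta$ is a positive basis of $\mathbb R^n$ with cosine measure $\frac{1-\delta n}{\sqrt{n(\delta^2n-2\delta+1)}}$.
   Context: $e^{n\times n}$ is the $n\times n$ all-ones matrix. A finite set $\mathcal P$ is a positive basis if its positive span $\{\sum\lambda_id_i:\lambda_i\ge0\}$ is $\mathbb R^n$ and no $d\in\mathcal P$ lies in the positive span of $\mathcal P\setminus\{d\}$. The cosine measure of a finite $\mathcal S\subset\mathbb R^n\setminus\{\mathbf 0\}$ is $\min_{\|u\|=1}\max_{d\in\mathcal S}\frac{d^\top u}{\|d\|}$. *)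

(* Defs.v *)
From HB Require Import structures.
From mathcomp Require Import all_boot all_order all_algebra.
From mathcomp Require Import reals.
Set Implicit Arguments. Unset Strict Implicit. Unset Printing Implicit Defensive.
Import Order.TTheory GRing.Theory Num.Theory.
Local Open Scope ring_scope.

Section Defs.
Variable R : realType.
Variable n : nat.

Definition dotv (u v : 'cV[R]_n) : R := \sum_(i < n) u i 0 * v i 0.
Definition normv (u : 'cV[R]_n) : R := Num.sqrt (dotv u u).

Definition pspan (S : seq 'cV[R]_n) : 'cV[R]_n -> Prop :=
  fun v => exists lam : 'I_(size S) -> R,
    (forall i, 0 <= lam i) /\ v = \sum_(i < size S) lam i *: S`_i.

Definition positive_basis (S : seq 'cV[R]_n) : Prop :=
  (forall v, pspan S v) /\
  (forall d, d \in S -> ~ pspan [seq x <- S | x != d] d).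

Definition cosr (d u : 'cV[R]_n) : R := dotv d u / normv d.

(* c is the cosine measure of the (nonempty) finite set S:
   c = min_{||u|| = 1} max_{d in S} d^T u / ||d||, i.e. for every unit u the
   max is >= c, and the min is attained at some unit u where the max is <= c. *)
Definition cosine_measure_is (S : seq 'cV[R]_n) (c : R) : Prop :=
  (forall u, normv u = 1 -> exists2 d, d \in S & c <= cosr d u) /\
  (exists u, normv u = 1 /\ forall d, d \in S -> cosr d u <= c).
End Defs.

Definition ones_mx (R : realType) (n : nat) : 'M[R]_n := const_mx 1.

(* Main.v *)
Require Import Defs.
From HB Require Import structures.
From mathcomp Require Import all_boot all_order all_algebra.
From mathcomp Require Import reals ring lra.
Import Order.TTheory GRing.Theory Num.Theory.
Local Open Scope ring_scope.

Section S.
Variable R : realType.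
Variable n : nat.
Variable delta : R.
Hypothesis hn : (2 <= n)%N.
Hypothesis hd0 : 0 <= delta.
Hypothesis hd1 : delta < 1 / n%:R.

Definition Bm : 'M[R]_n := 1%:M - delta *: ones_mx R n.
Definition Qv : R := delta ^+ 2 * n%:R - 2 * delta + 1.
Definition al : R := 1 / Num.sqrt Qv.

Lemma n_gt0 : (0 < n%:R :> R).
Proof. rewrite ltr0n; by case: n hn. Qed.
Lemma n_ge2 : (2 <= n%:R :> R).
Proof. by rewrite (ler_nat R 2 n). Qed.
Lemma hdn : delta * n%:R < 1.
Proof. by rewrite -ltr_pdivlMr ?n_gt0. Qed.
Lemma Q_gt0 : 0 < Qv.
Proof. have := hdn; have := n_ge2; rewrite /Qv; nra. Qed.
Lemma al_gt0 : 0 < al.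
Proof. by rewrite /al divr_gt0 // sqrtr_gt0 Q_gt0. Qed.

Lemma BE i j : Bm i j = (i == j)%:R - delta.
Proof. by rewrite /Bm /ones_mx !mxE mulr1. Qed.

Lemma colBE i k : col i Bm k 0 = (k == i)%:R - delta.
Proof. rewrite mxE; exact: BE. Qed.

Lemma dotvZl (a : R) (u v : 'cV[R]_n) : dotv (a *: u) v = a * dotv u v.
Proof. rewrite /dotv mulr_sumr; apply: eq_bigr => i _; by rewrite mxE mulrA. Qed.
Lemma dotvNl (u v : 'cV[R]_n) : dotv (- u) v = - dotv u v.
Proof. rewrite /dotv -sumrN; apply: eq_bigr => i _; by rewrite mxE mulNr. Qed.

Lemma dot_bu i (u : 'cV[R]_n) : dotv (col i Bm) u = u i 0 - delta * \sum_l u l 0.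
Proof.
rewrite /dotv.
under eq_bigr => l _ do rewrite colBE mulrBl.
rewrite sumrB mulr_sumr; congr (_ - _).
rewrite (bigD1 i) //= eqxx mul1r big1 ?addr0 // => l /negbTE ->; by rewrite mul0r.
Qed.

Lemma sum_colB i : \sum_l col i Bm l 0 = 1 - delta * n%:R.
Proof.
under eq_bigr => l _ do rewrite colBE.
rewrite sumrB sumr_const card_ord mulr_natr; congr (_ - _).
rewrite (bigD1 i) //= eqxx big1 ?addr0 // => l /negbTE -> //.
Qed.

Lemma dot_bb i : dotv (col i Bm) (col i Bm) = Qv.
Proof. rewrite dot_bu sum_colB colBE eqxx /Qv (_ : true%:R = 1 :> R) //; ring. Qed.

Lemma dotvC (u v : 'cV[R]_n) : dotv u v = dotv v u.
Proof. rewrite /dotv; apply: eq_bigr => i _; by rewrite mulrC. Qed.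

Lemma normv_Pb i : normv (al *: col i Bm) = 1.
Proof.
rewrite /normv dotvZl dotvC dotvZl dot_bb mulrA.
have hQ := Q_gt0.
have -> : al * al * Qv = 1.
  rewrite /al -expr2 -[X in _ * X](@sqr_sqrtr _ Qv) ?ltW //.
  have : Num.sqrt Qv != 0 by rewrite gt_eqF // sqrtr_gt0.
  by move=> h; field.
by rewrite sqrtr1.
Qed.

Lemma normv_Nb i : normv (- (al *: col i Bm)) = 1.
Proof. by rewrite /normv dotvNl dotvC dotvNl opprK -(normv_Pb i). Qed.

Lemma cosr_Pb i u : cosr (al *: col i Bm) u = al * dotv (col i Bm) u.
Proof. by rewrite /cosr normv_Pb divr1 dotvZl. Qed.
Lemma cosr_Nb i u : cosr (- (al *: col i Bm)) u = - (al * dotv (col i Bm) u).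
Proof. by rewrite /cosr normv_Nb divr1 dotvNl dotvZl. Qed.


Definition Pl : seq 'cV[R]_n :=
  [seq al *: col i Bm | i <- enum 'I_n] ++ [seq - (al *: col i Bm) | i <- enum 'I_n].

Lemma size_Pl : size Pl = (n + n)%N.
Proof. by rewrite /Pl size_cat !size_map -enumT size_enum_ord. Qed.

Lemma Pl_l (j : 'I_n) : Pl`_(lshift n j) = al *: col j Bm.
Proof.
rewrite /Pl /= nth_cat size_map. rewrite -?enumT size_enum_ord ltn_ord (nth_map j) ?size_enum_ord //.
by rewrite nth_ord_enum.
Qed.

Lemma Pl_r (j : 'I_n) : Pl`_(rshift n j) = - (al *: col j Bm).
Proof.
rewrite /Pl /= nth_cat size_map -?enumT size_enum_ord ltnNge leq_addr /= addKn.
by rewrite (nth_map j) ?size_enum_ord // nth_ord_enum.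
Qed.

Lemma mem_Pl d : d \in Pl -> exists j, d = al *: col j Bm \/ d = - (al *: col j Bm).
Proof.
rewrite /Pl mem_cat => /orP [] /mapP [j _ ->]; exists j; by [left|right].
Qed.

Lemma Pl_memP j : al *: col j Bm \in Pl.
Proof. by rewrite /Pl mem_cat; apply/orP; left; apply/mapP; exists j; rewrite ?mem_enum. Qed.
Lemma Pl_memN j : - (al *: col j Bm) \in Pl.
Proof. by rewrite /Pl mem_cat; apply/orP; right; apply/mapP; exists j; rewrite ?mem_enum. Qed.

Definition kk : R := delta / (1 - delta * n%:R).
Definition Ff (j : 'I_n) (v : 'cV[R]_n) : R := v j 0 + kk * \sum_l v l 0.

Lemma Ff_Z j a v : Ff j (a *: v) = a * Ff j v.
Proof.
rewrite /Ff.
have -> : \sum_l (a *: v) l 0 = a * \sum_l v l 0.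
  by rewrite mulr_sumr; apply: eq_bigr => l _; rewrite mxE.
rewrite mxE; ring.
Qed.
Lemma Ff_N j v : Ff j (- v) = - Ff j v.
Proof. by rewrite -scaleN1r Ff_Z mulN1r. Qed.

Lemma Ff_sum j m (lam : 'I_m -> R) (S : 'I_m -> 'cV[R]_n) :
  Ff j (\sum_(i < m) lam i *: S i) = \sum_(i < m) lam i * Ff j (S i).
Proof.
have E : forall l, (\sum_(i < m) lam i *: S i) l 0 = \sum_(i < m) lam i * S i l 0.
  by move=> l; rewrite summxE; apply: eq_bigr => i _; rewrite mxE.
rewrite /Ff E.
have -> : \sum_l (\sum_(i < m) lam i *: S i) l 0 = \sum_(l < n) \sum_(i < m) lam i * S i l 0.
  by apply: eq_bigr => l _; exact: E.
rewrite exchange_big /= mulr_sumr -big_split /=; apply: eq_bigr => i _.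
by rewrite mulrDr -!mulr_sumr mulrCA.
Qed.

Lemma one_m_dn : 1 - delta * n%:R != 0.
Proof. by rewrite subr_eq0 eq_sym lt_eqF // hdn. Qed.

Lemma Ff_b j i : Ff j (col i Bm) = (i == j)%:R.
Proof.
rewrite /Ff sum_colB colBE eq_sym /kk.
have h := one_m_dn.
by field.
Qed.


Lemma minimal d : d \in Pl -> ~ pspan [seq x <- Pl | x != d] d.
Proof.
move=> /mem_Pl [j [-> | ->]] [lam [hlam e]].
- have := congr1 (Ff j) e.
  rewrite Ff_sum Ff_Z Ff_b eqxx mulr1 => E.
  have : \sum_(i < size [seq x <- Pl | x != al *: col j Bm]) lam i *
     Ff j ([seq x <- Pl | x != al *: col j Bm]`_i) <= 0.
    apply: sumr_le0 => i _; apply: mulr_ge0_le0 => //.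
    have := mem_nth 0 (ltn_ord i); rewrite mem_filter => /andP [hne /mem_Pl [m [ex|ex]]];
      rewrite ex in hne *.
    + rewrite Ff_Z Ff_b; case: (eqVneq m j) => [em|_]; last by rewrite mulr0.
      by rewrite em eqxx in hne.
    + rewrite Ff_N Ff_Z Ff_b oppr_le0; apply: mulr_ge0; [exact: ltW al_gt0 | exact: ler0n].
  by rewrite -E leNgt al_gt0.
- have := congr1 (Ff j) e.
  rewrite Ff_sum Ff_N Ff_Z Ff_b eqxx mulr1 => E.
  have : 0 <= \sum_(i < size [seq x <- Pl | x != - (al *: col j Bm)]) lam i *
     Ff j ([seq x <- Pl | x != - (al *: col j Bm)]`_i).
    apply: sumr_ge0 => i _; apply: mulr_ge0 => //.
    have := mem_nth 0 (ltn_ord i); rewrite mem_filter => /andP [hne /mem_Pl [m [ex|ex]]];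
      rewrite ex in hne *.
    + rewrite Ff_Z Ff_b; apply: mulr_ge0; [exact: ltW al_gt0 | exact: ler0n].
    + rewrite Ff_N Ff_Z Ff_b; case: (eqVneq m j) => [em|_]; last by rewrite mulr0 oppr0.
      by rewrite em eqxx in hne.
  by rewrite -E oppr_ge0 leNgt al_gt0.
Qed.

Lemma sum_cast m (e : m = (n + n)%N) (h : 'I_(n + n) -> 'cV[R]_n) :
  \sum_(i < m) h (cast_ord e i) = \sum_(i < n + n) h i.
Proof. subst m; apply: eq_bigr => i _; by rewrite cast_ord_id. Qed.

Lemma sum_castP m (e : m = (n + n)%N) (G : 'I_(n + n) -> R) :
  \sum_(i < m) G (cast_ord e i) *: Pl`_i = \sum_(i < n + n) G i *: Pl`_i.
Proof. subst m; apply: eq_bigr => i _; by rewrite cast_ord_id. Qed.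

Lemma split_l (j : 'I_n) : split (lshift n j) = inl j.
Proof. exact: (unsplitK (inl _ j)). Qed.
Lemma split_r (j : 'I_n) : split (rshift n j) = inr j.
Proof. exact: (unsplitK (inr _ j)). Qed.

Lemma decomp (v : 'cV[R]_n) : v = \sum_i Ff i v *: col i Bm.
Proof.
apply/matrixP => l c; rewrite ord1 summxE.
under eq_bigr do rewrite mxE colBE mulrBr.
rewrite sumrB (bigD1 l) //= eqxx mulr1 big1 ?addr0; last first.
  by move=> i /negbTE; rewrite eq_sym => ->; rewrite mulr0.
rewrite -mulr_suml /Ff big_split /= -mulr_sumr sumr_const card_ord.
rewrite /kk.
have h := one_m_dn.
rewrite -mulr_natl.
by field.
Qed.

Lemma spanning v : pspan Pl v.
Proof.
pose x i := Ff i v.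
pose Gf (k : 'I_(n + n)) : R := match split k with
  | inl j => (`|x j| + x j) / (2 * al) | inr j => (`|x j| - x j) / (2 * al) end.
exists (fun i : 'I_(size Pl) => Gf (cast_ord size_Pl i)); split.
  move=> i; rewrite /Gf; case: (split _) => j; apply: divr_ge0;
    try (by apply: mulr_ge0 => //; exact: ltW al_gt0);
    have h1 := ler_norm (x j); have h2 := ler_norm (- x j); rewrite normrN in h2; lra.
rewrite (@sum_castP _ size_Pl Gf) big_split_ord /= -big_split /= [LHS]decomp; apply: eq_bigr => j _.
rewrite /Gf split_l split_r Pl_l Pl_r scalerN !scalerA -scaleNr -scalerDl; congr (_ *: _).
have h := al_gt0; have h' : al != 0 by rewrite gt_eqF.
by rewrite /x; field.
Qed.


Definition rn : R := Num.sqrt n%:R.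
Lemma rn_gt0 : 0 < rn.
Proof. by rewrite /rn sqrtr_gt0 n_gt0. Qed.
Lemma rn_sq : rn ^+ 2 = n%:R.
Proof. by rewrite /rn sqr_sqrtr // ltW // n_gt0. Qed.

Definition tt : R := (1 - delta * n%:R) / rn.

Lemma c_eq : (1 - delta * n%:R) / Num.sqrt (n%:R * (delta ^+ 2 * n%:R - 2 * delta + 1))
  = al * tt.
Proof.
rewrite sqrtrM ?ler0n // -/Qv -/rn /al /tt.
have h1 : rn != 0 by rewrite gt_eqF // rn_gt0.
have h2 : Num.sqrt Qv != 0 by rewrite gt_eqF // sqrtr_gt0 Q_gt0.
field; by rewrite h1 h2.
Qed.

Lemma tt_ge0 : 0 <= tt.
Proof. by rewrite /tt divr_ge0 ?subr_ge0 ?ltW ?hdn ?rn_gt0. Qed.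

Lemma dotvv_sum (u : 'cV[R]_n) : dotv u u = \sum_l u l 0 ^+ 2.
Proof. by apply: eq_bigr => l _; rewrite expr2. Qed.

Lemma lower (u : 'cV[R]_n) : normv u = 1 -> exists2 d, d \in Pl & al * tt <= cosr d u.
Proof.
move=> hu.
case: (boolP [exists j, (al * tt <= cosr (al *: col j Bm) u) || (al * tt <= cosr (- (al *: col j Bm)) u)]).
  move/existsP => [j /orP [h|h]]; [exists (al *: col j Bm) | exists (- (al *: col j Bm))] => //.
    exact: Pl_memP.
  exact: Pl_memN.
rewrite negb_exists => /forallP H.
have hw : forall l, `|u l 0 - delta * \sum_k u k 0| < tt.
  move=> l; move: (H l); rewrite negb_or -!ltNge cosr_Pb cosr_Nb dot_bu => /andP [h1 h2].
  rewrite ltr_norml; apply/andP; split.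
    by rewrite ltrNl -(ltr_pM2l al_gt0) mulrN.
  by rewrite -(ltr_pM2l al_gt0).
set s := \sum_k u k 0 in hw.
have hn0 : (0 < n)%N by case: n hn.
pose i0 : 'I_n := Ordinal hn0.
have hdd : dotv u u = 1.
  have h0 : 0 <= dotv u u by rewrite dotvv_sum sumr_ge0 // => l _; rewrite sqr_ge0.
  by rewrite -(sqr_sqrtr h0) -/(normv u) hu expr1n.
have hW : \sum_l (u l 0 - delta * s) = (1 - delta * n%:R) * s.
  by rewrite sumrB sumr_const card_ord -/s -mulr_natl; ring.
have hA : \sum_l (u l 0 - delta * s) ^+ 2 < n%:R * tt ^+ 2.
  have -> : n%:R * tt ^+ 2 = \sum_(l < n) tt ^+ 2 by rewrite sumr_const card_ord mulr_natl.
  apply: ltr_sum; first by apply/hasP; exists i0; rewrite ?mem_index_enum.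
  move=> l _; have := hw l; have := normr_ge0 (u l 0 - delta * s).
  have := real_normK (num_real (u l 0 - delta * s)); have := tt_ge0; nra.
have hS : `|(1 - delta * n%:R) * s| <= n%:R * tt.
  rewrite -hW; apply: le_trans (ler_norm_sum _ _ _) _.
  have -> : n%:R * tt = \sum_(l < n) tt by rewrite sumr_const card_ord mulr_natl.
  by apply: ler_sum => l _; apply: ltW.
have hs : s ^+ 2 <= n%:R.
  move: hS; rewrite normrM ger0_norm /tt; last by rewrite subr_ge0 ltW // hdn.
  have hr := rn_gt0; have hr2 := rn_sq; have hd := hdn.
  have -> : n%:R * ((1 - delta * n%:R) / rn) = (1 - delta * n%:R) * rn.
    rewrite -hr2; field; by rewrite gt_eqF.
  rewrite ler_pM2l ?subr_gt0 // => h.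
  rewrite -hr2; have := real_normK (num_real s); have := normr_ge0 s; nra.
have hsum : dotv u u = \sum_l (u l 0 - delta * s) ^+ 2 + s ^+ 2 * delta * (2 - delta * n%:R).
  rewrite dotvv_sum.
  have -> : \sum_l u l 0 ^+ 2 = \sum_l ((u l 0 - delta * s) ^+ 2 + (2 * delta * s * u l 0 - delta ^+ 2 * s ^+ 2)).
    by apply: eq_bigr => l _; ring.
  rewrite big_split /= sumrB sumr_const card_ord -mulr_sumr -/s -mulr_natl; ring.
move: hA; rewrite /tt expr_div_n rn_sq.
have hnn := n_gt0.
have -> : n%:R * ((1 - delta * n%:R) ^+ 2 / n%:R) = (1 - delta * n%:R) ^+ 2.
  by field; rewrite gt_eqF.
move: (\sum_l _) hsum => A hsum hA.
have hd := hdn; have h2 := n_ge2.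
have : 0 <= (n%:R - s ^+ 2) * delta * (2 - delta * n%:R).
  apply: mulr_ge0; [apply: mulr_ge0 => //; lra | nra].
nra.
Qed.

Lemma upper : exists u, normv u = 1 /\ forall d, d \in Pl -> cosr d u <= al * tt.
Proof.
exists (const_mx (1 / rn)); split.
  rewrite /normv dotvv_sum.
  under eq_bigr do rewrite mxE.
  rewrite sumr_const card_ord -mulr_natl expr_div_n rn_sq expr1n.
  have h := n_gt0.
  by rewrite mul1r mulfV ?gt_eqF // sqrtr1.
move=> d /mem_Pl [j [->|->]]; rewrite ?cosr_Pb ?cosr_Nb dot_bu mxE.
  under eq_bigr do rewrite mxE.
  rewrite sumr_const card_ord /tt -mulr_natl; rewrite le_eqVlt; apply/orP; left; apply/eqP; field; by rewrite gt_eqF // rn_gt0.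
under eq_bigr do rewrite mxE.
rewrite sumr_const card_ord -mulr_natl.
have -> : 1 / rn - delta * (n%:R * (1 / rn)) = tt.
  rewrite /tt; field; by rewrite gt_eqF // rn_gt0.
have := mulr_ge0 (ltW al_gt0) tt_ge0; lra.
Qed.

End S.

Theorem theorem15 (R : realType) (n : nat) (delta : R)
  (hn : (2 <= n)%N) (hd0 : 0 <= delta) (hd1 : delta < 1 / n%:R) :
  let B : 'M[R]_n := 1%:M - delta *: ones_mx R n in
  let alpha : R := 1 / Num.sqrt (delta ^+ 2 * n%:R - 2 * delta + 1) in
  let P : seq 'cV[R]_n :=
    [seq alpha *: col i B | i <- enum 'I_n] ++
    [seq - (alpha *: col i B) | i <- enum 'I_n] in
  positive_basis P /\
  cosine_measure_is P ((1 - delta * n%:R) /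
     Num.sqrt (n%:R * (delta ^+ 2 * n%:R - 2 * delta + 1))).
Proof.
move=> B alpha P.
have -> : P = @Pl R n delta by [].
rewrite (@c_eq R n delta) //.
split; split.
- move=> v; by apply: (@spanning R n delta).
- move=> d hd; by apply: (@minimal R n delta).
- move=> u hu; by apply: (@lower R n delta).
- by apply: (@upper R n delta).
Qed.
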